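(* Let $\mathcal{D}=(\mathcal{G}, X, Z, T, T', Y, Y')$ be random quantities on a probability space whose joint distribution (with densities, denoted generically by $p$) follows the causal structure of the Bayesian network with edges $X\to Z$, $\mathcal{G}\to Z$, $Z\to Y$, $T\to Y$, $Z\to Y'$, $T'\to Y'$, and optionally $X\to \mathcal{G}$, $X\to T$, $X\to T'$; that is, the joint density factorizes as $$p(\mathcal{G}, X, Z, T, T', Y, Y') = p(X)\,p(\mathcal{G}\mid X)\,p(T\mid X)\,p(T'\mid X)\,p(Z\mid \mathcal{G}, X)\,p(Y\mid Z, T)\,p(Y'\mid Z, T'),$$ where the factors $p(\mathcal{G}\mid X)$, $p(T\mid X)$, $p(T'\mid X)$ may or may not actually depend on $X$. Define $$J(\mathcal{D}) = \log p(Y'\mid Y, \mathcal{G}, X, T, T') + \log p(Y\mid \mathcal{G}, X, T).$$ Then $$J(\mathcal{D}) \ge \mathbb{E}_{p(Z\mid Y, \mathcal{G}, X, T)} \log p(Y\mid Z, T) + \log p(Y'\mid \mathcal{G}, X, T') - \mathrm{KL}\big[p(Z\mid Y, \mathcal{G}, X, T)\,\big\|\, p(Z\mid Y', \mathcal{G}, X, T')\big].$$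
   Context: $Y\in\mathbb{R}^n$ is an outcome vector (e.g. gene expressions), $X$ is a vector of covariates, $T$ is a treatment, $Z\in\mathbb{R}^d$ is an unobserved latent feature vector, $T'$ is a counterfactual treatment and $Y'$ the corresponding counterfactual outcome (unobserved). $\mathcal{G}=(\mathcal{V},\mathcal{E})$ is a graph with node feature matrix $\mathcal{V}\in\mathbb{R}^{n\times v}$ and adjacency matrix $\mathcal{E}\in\{0,1\}^{n\times n}$, treated as a (possibly deterministic) random variable. $\mathrm{KL}$ denotes Kullback–Leibler divergence, and all conditional densities appearing are assumed to exist and be positive. *)

(* Defs.v *)
From HB Require Import structures.
From mathcomp Require Import all_boot all_order all_algebra.
From mathcomp Require Import all_classical all_reals all_analysis.
Set Implicit Arguments. Unset Strict Implicit. Unset Printing Implicit Defensive.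
Import Order.TTheory GRing.Theory Num.Theory.
Local Open Scope ring_scope.
Local Open Scope ereal_scope.

(* The factor densities are
     pX x, pG x g = p(g|x), pT x t = p(t|x), pT' x t' = p(t'|x),
     pZ g x z = p(z|g,x), pY z t y = p(y|z,t), pY' z t' y' = p(y'|z,t').
   All other (marginal / conditional) densities are DERIVED from the joint density
   by marginalisation (nested integrals) and ratios. *)

Section Model.
Context {R : realType} {dG dX dZ dT dY : measure_display}
  {TG : measurableType dG} {TX : measurableType dX} {TZ : measurableType dZ}
  {TT : measurableType dT} {TY : measurableType dY}.
Variables (muG : {measure set TG -> \bar R}) (muX : {measure set TX -> \bar R})
  (muZ : {measure set TZ -> \bar R}) (muT : {measure set TT -> \bar R})
  (muY : {measure set TY -> \bar R}).
Variables (pX : TX -> R) (pG : TX -> TG -> R) (pT pT' : TX -> TT -> R)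
  (pZ : TG -> TX -> TZ -> R) (pY pY' : TZ -> TT -> TY -> R).

Definition joint (g : TG) (x : TX) (z : TZ) (t t' : TT) (y y' : TY) : R :=
  (pX x * pG x g * pT x t * pT' x t' * pZ g x z * pY z t y * pY' z t' y')%R.

Definition m_YpYGXTTp y' y g x t t' :=
  \int[muZ]_z (joint g x z t t' y y')%:E.
Definition m_YGXTTp y g x t t' :=
  \int[muZ]_z \int[muY]_y' (joint g x z t t' y y')%:E.
Definition m_YGXT y g x t :=
  \int[muZ]_z \int[muT]_t' \int[muY]_y' (joint g x z t t' y y')%:E.
Definition m_GXT g x t :=
  \int[muY]_y \int[muZ]_z \int[muT]_t' \int[muY]_y' (joint g x z t t' y y')%:E.
Definition m_ZYGXT z y g x t :=
  \int[muT]_t' \int[muY]_y' (joint g x z t t' y y')%:E.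
Definition m_YZT y z t :=
  \int[muG]_g \int[muX]_x \int[muT]_t' \int[muY]_y' (joint g x z t t' y y')%:E.
Definition m_ZT z t :=
  \int[muY]_y \int[muG]_g \int[muX]_x \int[muT]_t' \int[muY]_y'
    (joint g x z t t' y y')%:E.
Definition m_YpGXTp y' g x t' :=
  \int[muZ]_z \int[muT]_t \int[muY]_y (joint g x z t t' y y')%:E.
Definition m_GXTp g x t' :=
  \int[muY]_y' \int[muZ]_z \int[muT]_t \int[muY]_y (joint g x z t t' y y')%:E.
Definition m_ZYpGXTp z y' g x t' :=
  \int[muT]_t \int[muY]_y (joint g x z t t' y y')%:E.

Definition cond (num den : \bar R) : R := (fine num / fine den)%R.

Definition p_Yp_given_YGXTTp y' y g x t t' : R :=
  cond (m_YpYGXTTp y' y g x t t') (m_YGXTTp y g x t t').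
Definition p_Y_given_GXT y g x t : R := cond (m_YGXT y g x t) (m_GXT g x t).
Definition p_Z_given_YGXT z y g x t : R := cond (m_ZYGXT z y g x t) (m_YGXT y g x t).
Definition p_Y_given_ZT y z t : R := cond (m_YZT y z t) (m_ZT z t).
Definition p_Yp_given_GXTp y' g x t' : R := cond (m_YpGXTp y' g x t') (m_GXTp g x t').
Definition p_Z_given_YpGXTp z y' g x t' : R :=
  cond (m_ZYpGXTp z y' g x t') (m_YpGXTp y' g x t').

Definition Jobj y' y g x t t' : R :=
  (ln (p_Yp_given_YGXTTp y' y g x t t') + ln (p_Y_given_GXT y g x t))%R.

End Model.

Definition expect {R : realType} {d} {T : measurableType d}
  (mu : {measure set T -> \bar R}) (f h : T -> R) : \bar R :=
  \int[mu]_z (f z * h z)%:E.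

Definition KL {R : realType} {d} {T : measurableType d}
  (mu : {measure set T -> \bar R}) (f g : T -> R) : \bar R :=
  \int[mu]_z (f z * ln (f z / g z))%:E.

(* Main.v *)
Require Import Defs.
From HB Require Import structures.
From mathcomp Require Import all_boot all_order all_algebra.
From mathcomp Require Import all_classical all_reals all_analysis.
From mathcomp Require Import measurable_realfun.
From mathcomp Require Import ring lra.
Import Order.TTheory GRing.Theory Num.Theory.
Local Open Scope ring_scope.
Local Open Scope ereal_scope.
Section H.
Set Implicit Arguments. Unset Strict Implicit.

Context {R : realType}.

Lemma int_pos {d} {T : measurableType d} (mu : {measure set T -> \bar R})
  (f : T -> \bar R) (h : T -> R) :
  measurable_fun setT f -> (forall z, 0 < f z) -> measurable_fun setT h ->
  (forall z, 0 <= h z)%R -> \int[mu]_z (h z)%:E = 1 -> 0 < \int[mu]_z f z.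
Proof.
move=> mf fp mh hp h1.
have i0 : 0 <= \int[mu]_z f z by apply: integral_ge0 => z _; exact: ltW.
rewrite lt_neqAle i0 andbT; apply/eqP => H0.
have : ae_eq mu setT f (cst 0).
  apply/ae_eq_integral_abs => //; rewrite H0; apply: eq_integral => z _.
  by rewrite gee0_abs// ltW.
case=> N [mN muN sub].
have NT : N = setT.
  rewrite eqEsubset; split => //.
  move=> z _; apply: sub; move=> /(_ I) fz.
  by move: (fp z); rewrite fz ltxx.
move: h1; rewrite (@ge0_negligible_integral _ _ _ mu setT N) //.
- by rewrite NT setDv integral_set0 => -[] /eqP; rewrite eq_sym oner_eq0.
- by apply/measurable_EFinP.
- by move=> z _; rewrite lee_fin.
Qed.

Lemma intZ {d} {T : measurableType d} (mu : {measure set T -> \bar R})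
  (k : R) (f : T -> R) : (0 <= k)%R -> measurable_fun setT f ->
  (forall z, 0 <= f z)%R ->
  \int[mu]_z (k * f z)%:E = k%:E * \int[mu]_z (f z)%:E.
Proof.
move=> k0 mf f0; under eq_integral do rewrite EFinM.
apply: ge0_integralZl_EFin => //; last exact/measurable_EFinP.
by move=> z _; rewrite lee_fin.
Qed.

Lemma fin_pos (X : \bar R) (k : R) : (0 < k)%R -> 0 < X -> k%:E * X < +oo ->
  exists r : R, (0 < r)%R /\ X = r%:E.
Proof.
case: X => [r| |] k0 //.
- by move=> r0 _; exists r; split => //; rewrite -lte_fin.
- by rewrite mulry gtr0_sg // mul1e ltxx.
Qed.
End H.

Theorem theorem1 (R : realType) (dG dX dZ dT dY : measure_display)
  (TG : measurableType dG) (TX : measurableType dX) (TZ : measurableType dZ)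
  (TT : measurableType dT) (TY : measurableType dY)
  (muG : {sigma_finite_measure set TG -> \bar R})
  (muX : {sigma_finite_measure set TX -> \bar R})
  (muZ : {sigma_finite_measure set TZ -> \bar R})
  (muT : {sigma_finite_measure set TT -> \bar R})
  (muY : {sigma_finite_measure set TY -> \bar R})
  (pX : TX -> R) (pG : TX -> TG -> R) (pT pT' : TX -> TT -> R)
  (pZ : TG -> TX -> TZ -> R) (pY pY' : TZ -> TT -> TY -> R)
  (* the factors are (jointly) measurable *)
  (mpX : measurable_fun setT pX)
  (mpG : measurable_fun setT (fun q : TX * TG => pG q.1 q.2))
  (mpT : measurable_fun setT (fun q : TX * TT => pT q.1 q.2))
  (mpT' : measurable_fun setT (fun q : TX * TT => pT' q.1 q.2))
  (mpZ : measurable_fun setT (fun q : TG * TX * TZ => pZ q.1.1 q.1.2 q.2))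
  (mpY : measurable_fun setT (fun q : TZ * TT * TY => pY q.1.1 q.1.2 q.2))
  (mpY' : measurable_fun setT (fun q : TZ * TT * TY => pY' q.1.1 q.1.2 q.2))
  (* the factors are positive *)
  (pX_pos : forall x, (0 < pX x)%R)
  (pG_pos : forall x g, (0 < pG x g)%R)
  (pT_pos : forall x t, (0 < pT x t)%R)
  (pT'_pos : forall x t', (0 < pT' x t')%R)
  (pZ_pos : forall g x z, (0 < pZ g x z)%R)
  (pY_pos : forall z t y, (0 < pY z t y)%R)
  (pY'_pos : forall z t' y', (0 < pY' z t' y')%R)
  (* the factors are (conditional) probability densities *)
  (pX_norm : \int[muX]_x (pX x)%:E = 1)
  (pG_norm : forall x, \int[muG]_g (pG x g)%:E = 1)
  (pT_norm : forall x, \int[muT]_t (pT x t)%:E = 1)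
  (pT'_norm : forall x, \int[muT]_t' (pT' x t')%:E = 1)
  (pZ_norm : forall g x, \int[muZ]_z (pZ g x z)%:E = 1)
  (pY_norm : forall z t, \int[muY]_y (pY z t y)%:E = 1)
  (pY'_norm : forall z t', \int[muY]_y' (pY' z t' y')%:E = 1)
  (* a realisation D = (g, x, t, t', y, y') *)
  (g : TG) (x : TX) (t t' : TT) (y y' : TY)
  (* the conditional densities appearing exist (their marginals are finite) *)
  (fin1 : m_YpYGXTTp muZ pX pG pT pT' pZ pY pY' y' y g x t t' < +oo)
  (fin2 : m_YGXTTp muZ muY pX pG pT pT' pZ pY pY' y g x t t' < +oo)
  (fin3 : m_YGXT muZ muT muY pX pG pT pT' pZ pY pY' y g x t < +oo)
  (fin4 : m_GXT muZ muT muY pX pG pT pT' pZ pY pY' g x t < +oo)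
  (fin5 : forall z, m_ZT muG muX muT muY pX pG pT pT' pZ pY pY' z t < +oo)
  (fin6 : m_YpGXTp muZ muT muY pX pG pT pT' pZ pY pY' y' g x t' < +oo)
  (fin7 : m_GXTp muZ muT muY pX pG pT pT' pZ pY pY' g x t' < +oo)
  (* the expectation and the KL divergence are well defined (finite) *)
  (intE : muZ.-integrable setT (fun z =>
     (p_Z_given_YGXT muZ muT muY pX pG pT pT' pZ pY pY' z y g x t *
      ln (p_Y_given_ZT muG muX muT muY pX pG pT pT' pZ pY pY' y z t))%:E))
  (intKL : muZ.-integrable setT (fun z =>
     (p_Z_given_YGXT muZ muT muY pX pG pT pT' pZ pY pY' z y g x t *
      ln (p_Z_given_YGXT muZ muT muY pX pG pT pT' pZ pY pY' z y g x t /
          p_Z_given_YpGXTp muZ muT muY pX pG pT pT' pZ pY pY' z y' g x t'))%:E)) :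
  expect muZ
      (fun z => p_Z_given_YGXT muZ muT muY pX pG pT pT' pZ pY pY' z y g x t)
      (fun z => ln (p_Y_given_ZT muG muX muT muY pX pG pT pT' pZ pY pY' y z t))
  + (ln (p_Yp_given_GXTp muZ muT muY pX pG pT pT' pZ pY pY' y' g x t'))%:E
  - KL muZ
      (fun z => p_Z_given_YGXT muZ muT muY pX pG pT pT' pZ pY pY' z y g x t)
      (fun z => p_Z_given_YpGXTp muZ muT muY pX pG pT pT' pZ pY pY' z y' g x t')
  <= (Jobj muZ muT muY pX pG pT pT' pZ pY pY' y' y g x t t')%:E.

Proof.
have mGs x0 : measurable_fun setT (pG x0).
  have h : measurable_fun setT (fun g0 : TG => (x0, g0)) by apply: measurable_fun_pair.
  exact: (measurableT_comp mpG h).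
have mTs x0 : measurable_fun setT (pT x0).
  have h : measurable_fun setT (fun t0 : TT => (x0, t0)) by apply: measurable_fun_pair.
  exact: (measurableT_comp mpT h).
have mT's x0 : measurable_fun setT (pT' x0).
  have h : measurable_fun setT (fun t0 : TT => (x0, t0)) by apply: measurable_fun_pair.
  exact: (measurableT_comp mpT' h).
have mZs g0 x0 : measurable_fun setT (pZ g0 x0).
  have h : measurable_fun setT (fun z : TZ => (g0, x0, z)).
    by apply: measurable_fun_pair => //; apply: measurable_fun_pair.
  exact: (measurableT_comp mpZ h).
have mYs z0 t0 : measurable_fun setT (pY z0 t0).
  have h : measurable_fun setT (fun y0 : TY => (z0, t0, y0)).
    by apply: measurable_fun_pair => //; apply: measurable_fun_pair.
  exact: (measurableT_comp mpY h).
have mY's z0 t0 : measurable_fun setT (pY' z0 t0).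
  have h : measurable_fun setT (fun y0 : TY => (z0, t0, y0)).
    by apply: measurable_fun_pair => //; apply: measurable_fun_pair.
  exact: (measurableT_comp mpY' h).
have mYs2 t0 y0 : measurable_fun setT (fun z => pY z t0 y0).
  have h : measurable_fun setT (fun z : TZ => (z, t0, y0)).
    by apply: measurable_fun_pair => //; apply: measurable_fun_pair.
  exact: (measurableT_comp mpY h).
have mY's2 t0 y0 : measurable_fun setT (fun z => pY' z t0 y0).
  have h : measurable_fun setT (fun z : TZ => (z, t0, y0)).
    by apply: measurable_fun_pair => //; apply: measurable_fun_pair.
  exact: (measurableT_comp mpY' h).
have mZY : measurable_fun setT (fun q : TZ * TY => (pZ g x q.1 * pY q.1 t q.2)%R).
  apply: measurable_funM.
    exact: (measurableT_comp (mZs g x) measurable_fst).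
  have h : measurable_fun setT (fun q : TZ * TY => (q.1, t, q.2)).
    by apply: measurable_fun_pair => //; apply: measurable_fun_pair.
  exact: (measurableT_comp mpY h).
have mZY' : measurable_fun setT (fun q : TZ * TY => (pZ g x q.1 * pY' q.1 t' q.2)%R).
  apply: measurable_funM.
    exact: (measurableT_comp (mZs g x) measurable_fst).
  have h : measurable_fun setT (fun q : TZ * TY => (q.1, t', q.2)).
    by apply: measurable_fun_pair => //; apply: measurable_fun_pair.
  exact: (measurableT_comp mpY' h).
have mGX z0 : measurable_fun setT
    (fun q : TG * TX => (pX q.2 * pG q.2 q.1 * pT q.2 t * pZ q.1 q.2 z0)%R).
  apply: measurable_funM; [apply: measurable_funM; [apply: measurable_funM|]|].
  - exact: (measurableT_comp mpX measurable_snd).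
  - have h : measurable_fun setT (fun q : TG * TX => (q.2, q.1)).
      by apply: measurable_fun_pair.
    exact: (measurableT_comp mpG h).
  - have h : measurable_fun setT (fun q : TG * TX => (q.2, t)).
      by apply: measurable_fun_pair.
    exact: (measurableT_comp mpT h).
  - have h : measurable_fun setT (fun q : TG * TX => (q.1, q.2, z0)).
      by apply: measurable_fun_pair => //; apply: measurable_fun_pair.
    exact: (measurableT_comp mpZ h).
have Ly' g0 x0 z t0 t1 y0 : \int[muY]_y1 (joint pX pG pT pT' pZ pY pY' g0 x0 z t0 t1 y0 y1)%:E
    = (pX x0 * pG x0 g0 * pT x0 t0 * pT' x0 t1 * pZ g0 x0 z * pY z t0 y0)%:E.
  rewrite /joint (intZ _ (f := pY' z t1)) ?pY'_norm ?mule1 //.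
  - by rewrite !mulr_ge0 // ltW.
  - by move=> ?; exact: ltW.
have Lt'y' g0 x0 z t0 y0 : \int[muT]_t1 \int[muY]_y1 (joint pX pG pT pT' pZ pY pY' g0 x0 z t0 t1 y0 y1)%:E
    = (pX x0 * pG x0 g0 * pT x0 t0 * pZ g0 x0 z * pY z t0 y0)%:E.
  rewrite (eq_integral (fun t1 => ((pX x0 * pG x0 g0 * pT x0 t0 * pZ g0 x0 z * pY z t0 y0) * pT' x0 t1)%:E)); last first.
    by move=> t1 _; rewrite Ly'; congr EFin; ring.
  rewrite (intZ _ (f := pT' x0)) ?pT'_norm ?mule1 //.
  - by rewrite !mulr_ge0 // ltW.
  - by move=> ?; exact: ltW.
have Ly g0 x0 z t0 t1 y1 : \int[muY]_y0 (joint pX pG pT pT' pZ pY pY' g0 x0 z t0 t1 y0 y1)%:E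
    = (pX x0 * pG x0 g0 * pT x0 t0 * pT' x0 t1 * pZ g0 x0 z * pY' z t1 y1)%:E.
  rewrite (eq_integral (fun y0 => ((pX x0 * pG x0 g0 * pT x0 t0 * pT' x0 t1 * pZ g0 x0 z * pY' z t1 y1) * pY z t0 y0)%:E)); last first.
    by move=> y0 _; rewrite /joint; congr EFin; ring.
  rewrite (intZ _ (f := pY z t0)) ?pY_norm ?mule1 //.
  - by rewrite !mulr_ge0 // ltW.
  - by move=> ?; exact: ltW.
have Lty g0 x0 z t1 y1 : \int[muT]_t0 \int[muY]_y0 (joint pX pG pT pT' pZ pY pY' g0 x0 z t0 t1 y0 y1)%:E
    = (pX x0 * pG x0 g0 * pT' x0 t1 * pZ g0 x0 z * pY' z t1 y1)%:E.
  rewrite (eq_integral (fun t0 => ((pX x0 * pG x0 g0 * pT' x0 t1 * pZ g0 x0 z * pY' z t1 y1) * pT x0 t0)%:E)); last first.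
    by move=> t0 _; rewrite Ly; congr EFin; ring.
  rewrite (intZ _ (f := pT x0)) ?pT_norm ?mule1 //.
  - by rewrite !mulr_ge0 // ltW.
  - by move=> ?; exact: ltW.
have mZY3 : measurable_fun setT (fun z => (pZ g x z * pY z t y * pY' z t' y')%R).
  by apply: measurable_funM => //; apply: measurable_funM.
have mZY2 : measurable_fun setT (fun z => (pZ g x z * pY z t y)%R).
  by apply: measurable_funM.
have mZY'2 : measurable_fun setT (fun z => (pZ g x z * pY' z t' y')%R).
  by apply: measurable_funM.
pose b := (pX x * pG x g * pT x t)%R.
pose c := (pX x * pG x g * pT' x t')%R.
have b0 : (0 < b)%R by rewrite /b !mulr_gt0.
have c0 : (0 < c)%R by rewrite /c !mulr_gt0.
pose CZ := \int[muZ]_z (pZ g x z * pY z t y)%:E.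
pose EZ := \int[muZ]_z (pZ g x z * pY z t y * pY' z t' y')%:E.
pose DZ := \int[muZ]_z (pZ g x z * pY' z t' y')%:E.
pose K z := \int[muG]_g0 \int[muX]_x0 (pX x0 * pG x0 g0 * pT x0 t * pZ g0 x0 z)%:E.
have h1 : m_YpYGXTTp muZ pX pG pT pT' pZ pY pY' y' y g x t t' = (b * pT' x t')%:E * EZ.
  rewrite /m_YpYGXTTp (eq_integral (fun z => ((b * pT' x t') * (pZ g x z * pY z t y * pY' z t' y'))%:E)); last first.
    by move=> z _; rewrite /joint /b; congr EFin; ring.
  rewrite intZ //; first by rewrite mulr_ge0 // ltW.
  by move=> z; rewrite !mulr_ge0 // ltW.
have h2 : m_YGXTTp muZ muY pX pG pT pT' pZ pY pY' y g x t t' = (b * pT' x t')%:E * CZ.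
  rewrite /m_YGXTTp (eq_integral (fun z => ((b * pT' x t') * (pZ g x z * pY z t y))%:E)); last first.
    by move=> z _; rewrite Ly' /b; congr EFin; ring.
  rewrite intZ //; first by rewrite mulr_ge0 // ltW.
  by move=> z; rewrite !mulr_ge0 // ltW.
have h3 : m_YGXT muZ muT muY pX pG pT pT' pZ pY pY' y g x t = b%:E * CZ.
  rewrite /m_YGXT (eq_integral (fun z => (b * (pZ g x z * pY z t y))%:E)); last first.
    by move=> z _; rewrite Lt'y' /b; congr EFin; ring.
  rewrite intZ //; first by rewrite ltW.
  by move=> z; rewrite !mulr_ge0 // ltW.
have eZY : measurable_fun setT (fun q : TZ * TY => (pZ g x q.1 * pY q.1 t q.2)%:E).
  exact/measurable_EFinP.
have eZY' : measurable_fun setT (fun q : TZ * TY => (pZ g x q.1 * pY' q.1 t' q.2)%:E).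
  exact/measurable_EFinP.
have fZY : forall q : TZ * TY, 0 <= (pZ g x q.1 * pY q.1 t q.2)%:E.
  by move=> q; rewrite lee_fin mulr_ge0 // ltW.
have fZY' : forall q : TZ * TY, 0 <= (pZ g x q.1 * pY' q.1 t' q.2)%:E.
  by move=> q; rewrite lee_fin mulr_ge0 // ltW.
have FT : \int[muZ]_z \int[muY]_y0 (pZ g x z * pY z t y0)%:E =
    \int[muY]_y0 \int[muZ]_z (pZ g x z * pY z t y0)%:E.
  exact: (fubini_tonelli (m1:=muZ) (m2:=muY) _ eZY fZY).
have FT' : \int[muZ]_z \int[muY]_y0 (pZ g x z * pY' z t' y0)%:E =
    \int[muY]_y0 \int[muZ]_z (pZ g x z * pY' z t' y0)%:E.
  exact: (fubini_tonelli (m1:=muZ) (m2:=muY) _ eZY' fZY').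
have MG : measurable_fun setT (fun y0 => \int[muZ]_z (pZ g x z * pY z t y0)%:E).
  exact: (measurable_fun_fubini_tonelli_G (m1:=muZ) _ eZY fZY).
have MG' : measurable_fun setT (fun y0 => \int[muZ]_z (pZ g x z * pY' z t' y0)%:E).
  exact: (measurable_fun_fubini_tonelli_G (m1:=muZ) _ eZY' fZY').
have h4 : m_GXT muZ muT muY pX pG pT pT' pZ pY pY' g x t = b%:E.
  rewrite /m_GXT (eq_integral (fun y0 => b%:E * \int[muZ]_z (pZ g x z * pY z t y0)%:E)); last first.
    move=> y0 _; rewrite -intZ.
    - by apply: eq_integral => z _; rewrite Lt'y' /b; congr EFin; ring.
    - exact: ltW.
    - by apply: measurable_funM.
    - by move=> z; rewrite mulr_ge0 // ltW.
  have E1 := ge0_integralZl muY measurableT MG (k := b%:E)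
    (fun y0 _ => integral_ge0 _ (fun z _ => fZY (z, y0))) (ltW b0).
  simpl in E1; rewrite E1.
  rewrite -FT (eq_integral (fun z => (pZ g x z)%:E)) ?pZ_norm ?mule1 //.
  move=> z _; rewrite intZ ?pY_norm ?mule1 //; first exact: ltW.
  by move=> ?; exact: ltW.
have h7 : m_GXTp muZ muT muY pX pG pT pT' pZ pY pY' g x t' = c%:E.
  rewrite /m_GXTp (eq_integral (fun y0 => c%:E * \int[muZ]_z (pZ g x z * pY' z t' y0)%:E)); last first.
    move=> y0 _; rewrite -intZ.
    - by apply: eq_integral => z _; rewrite Lty /c; congr EFin; ring.
    - exact: ltW.
    - by apply: measurable_funM.
    - by move=> z; rewrite mulr_ge0 // ltW.
  have E1 := ge0_integralZl muY measurableT MG' (k := c%:E)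
    (fun y0 _ => integral_ge0 _ (fun z _ => fZY' (z, y0))) (ltW c0).
  simpl in E1; rewrite E1.
  rewrite -FT' (eq_integral (fun z => (pZ g x z)%:E)) ?pZ_norm ?mule1 //.
  move=> z _; rewrite intZ ?pY'_norm ?mule1 //; first exact: ltW.
  by move=> ?; exact: ltW.
have h5 z : m_ZYGXT muT muY pX pG pT pT' pZ pY pY' z y g x t = (b * (pZ g x z * pY z t y))%:E.
  by rewrite /m_ZYGXT Lt'y' /b; congr EFin; ring.
have h8 z : m_ZYpGXTp muT muY pX pG pT pT' pZ pY pY' z y' g x t' = (c * (pZ g x z * pY' z t' y'))%:E.
  by rewrite /m_ZYpGXTp Lty /c; congr EFin; ring.
have h6 : m_YpGXTp muZ muT muY pX pG pT pT' pZ pY pY' y' g x t' = c%:E * DZ.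
  rewrite /m_YpGXTp (eq_integral (fun z => (c * (pZ g x z * pY' z t' y'))%:E)); last first.
    by move=> z _; rewrite Lty /c; congr EFin; ring.
  rewrite intZ //; first by rewrite ltW.
  by move=> z; rewrite !mulr_ge0 // ltW.
have eGX z : measurable_fun setT
    (fun q : TG * TX => (pX q.2 * pG q.2 q.1 * pT q.2 t * pZ q.1 q.2 z)%:E).
  exact/measurable_EFinP.
have fGX z : forall q : TG * TX, 0 <= (pX q.2 * pG q.2 q.1 * pT q.2 t * pZ q.1 q.2 z)%:E.
  by move=> q; rewrite lee_fin !mulr_ge0 // ltW.
have MF z : measurable_fun setT
    (fun g0 => \int[muX]_x0 (pX x0 * pG x0 g0 * pT x0 t * pZ g0 x0 z)%:E).
  exact: (measurable_fun_fubini_tonelli_F (m2:=muX) _ (eGX z) (fGX z)).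
have mGXs z g0 : measurable_fun setT (fun x0 => (pX x0 * pG x0 g0 * pT x0 t * pZ g0 x0 z)%R).
  have h : measurable_fun setT (fun x0 : TX => (g0, x0)) by apply: measurable_fun_pair.
  exact: (measurableT_comp (mGX z) h).
have h9 y0 z : m_YZT muG muX muT muY pX pG pT pT' pZ pY pY' y0 z t = (pY z t y0)%:E * K z.
  rewrite /m_YZT (eq_integral (fun g0 => (pY z t y0)%:E *
      \int[muX]_x0 (pX x0 * pG x0 g0 * pT x0 t * pZ g0 x0 z)%:E)); last first.
    move=> g0 _; rewrite -intZ.
    - by apply: eq_integral => x0 _; rewrite Lt'y'; congr EFin; ring.
    - exact: ltW.
    - exact: mGXs.
    - by move=> x0; rewrite !mulr_ge0 // ltW.
  have E1 := ge0_integralZl muG measurableT (MF z) (k := (pY z t y0)%:E)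
    (fun g0 _ => integral_ge0 _ (fun x0 _ => fGX z (g0, x0))) (ltW (pY_pos z t y0)).
  by simpl in E1; rewrite E1.
have h10 z : m_ZT muG muX muT muY pX pG pT pT' pZ pY pY' z t = K z.
  rewrite /m_ZT (eq_integral (fun y0 => (pY z t y0)%:E * K z)); last first.
    by move=> y0 _; rewrite -h9.
  rewrite ge0_integralZr //.
  - by rewrite pY_norm mul1e.
  - exact/measurable_EFinP.
  - by move=> y0 _; rewrite lee_fin ltW.
  - by apply: integral_ge0 => g0 _; apply: integral_ge0 => x0 _; exact: (fGX z (g0, x0)).
have CZ0 : 0 < CZ.
  apply: (int_pos (h := pZ g x)) => //.
  - exact/measurable_EFinP.
  - by move=> z; rewrite lte_fin mulr_gt0.
  - by move=> z; exact: ltW.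
have EZ0 : 0 < EZ.
  apply: (int_pos (h := pZ g x)) => //.
  - exact/measurable_EFinP.
  - by move=> z; rewrite lte_fin !mulr_gt0.
  - by move=> z; exact: ltW.
have DZ0 : 0 < DZ.
  apply: (int_pos (h := pZ g x)) => //.
  - exact/measurable_EFinP.
  - by move=> z; rewrite lte_fin mulr_gt0.
  - by move=> z; exact: ltW.
have [Cr [Cr0 CE]] : exists r : R, (0 < r)%R /\ CZ = r%:E.
  by apply: (fin_pos b0 CZ0); rewrite -h3; exact: fin3.
have [Er [Er0 EE]] : exists r : R, (0 < r)%R /\ EZ = r%:E.
  apply: (fin_pos (k := b * pT' x t') _ EZ0); first by rewrite mulr_gt0.
  by rewrite -h1; exact: fin1.
have [Dr [Dr0 DE]] : exists r : R, (0 < r)%R /\ DZ = r%:E.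
  by apply: (fin_pos c0 DZ0); rewrite -h6; exact: fin6.
have KP z : (0 < fine (K z))%R /\ K z = (fine (K z))%:E.
  have K0 : 0 < K z.
    apply: (int_pos (MF z) _ (mGs x) _ (pG_norm x)); last by move=> g0; exact: ltW.
    move=> g0.
    have h : measurable_fun setT (fun x0 : TX => (g0, x0)) by apply: measurable_fun_pair.
    apply: (int_pos (measurableT_comp (eGX z) h) _ mpX _ pX_norm).
    + by move=> x0; rewrite lte_fin !mulr_gt0.
    + by move=> x0; exact: ltW.
  have [r [r0 ->]] : exists r : R, (0 < r)%R /\ K z = r%:E.
    by apply: (fin_pos (k := 1%R) ltr01 K0); rewrite mul1e -h10; exact: fin5.
  by [].
have pYY : p_Yp_given_YGXTTp muZ muY pX pG pT pT' pZ pY pY' y' y g x t t' = (Er / Cr)%R.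
  rewrite /p_Yp_given_YGXTTp /cond h1 h2 EE CE -!EFinM /=.
  have H1 := pT'_pos x t'.
  by field; rewrite !lt0r_neq0.
have pYG : p_Y_given_GXT muZ muT muY pX pG pT pT' pZ pY pY' y g x t = Cr.
  rewrite /p_Y_given_GXT /cond h3 h4 CE -!EFinM /=.
  by rewrite mulrAC divff ?mul1r // gt_eqF.
have pYpG : p_Yp_given_GXTp muZ muT muY pX pG pT pT' pZ pY pY' y' g x t' = Dr.
  rewrite /p_Yp_given_GXTp /cond h6 h7 DE -!EFinM /=.
  by rewrite mulrAC divff ?mul1r // gt_eqF.
have qE z : p_Z_given_YGXT muZ muT muY pX pG pT pT' pZ pY pY' z y g x t
    = (pZ g x z * pY z t y / Cr)%R.
  rewrite /p_Z_given_YGXT /cond h5 h3 CE -!EFinM /=.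
  by field; rewrite !lt0r_neq0.
have q'E z : p_Z_given_YpGXTp muZ muT muY pX pG pT pT' pZ pY pY' z y' g x t'
    = (pZ g x z * pY' z t' y' / Dr)%R.
  rewrite /p_Z_given_YpGXTp /cond h8 h6 DE -!EFinM /=.
  by field; rewrite !lt0r_neq0.
have P1E z : p_Y_given_ZT muG muX muT muY pX pG pT pT' pZ pY pY' y z t = pY z t y.
  rewrite /p_Y_given_ZT /cond h9 h10 (KP z).2 -EFinM /=.
  by rewrite mulfK // gt_eqF // (KP z).1.
pose qf z := (pZ g x z * pY z t y / Cr)%R.
pose qg z := (qf z * pY' z t' y')%R.
pose M := (Er / Cr)%R.
have M0 : (0 < M)%R by rewrite divr_gt0.
pose f1 z := (qf z * ln (pY z t y))%R.
pose f2 z := (qf z * ln (qf z / (pZ g x z * pY' z t' y' / Dr)))%R.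
pose K0 := (ln Cr - ln Dr + ln M - 1)%R.
pose hf z := (K0 * qf z + M^-1 * qg z)%R.
have qf0 z : (0 <= qf z)%R by rewrite /qf divr_ge0 // ?mulr_ge0 // ltW.
have qg0 z : (0 <= qg z)%R by rewrite /qg mulr_ge0 // ltW.
have mqf : measurable_fun setT qf by apply: measurable_funM.
have mqg : measurable_fun setT qg by apply: measurable_funM.
have Iq : \int[muZ]_z (qf z)%:E = 1.
  rewrite (eq_integral (fun z => (Cr^-1 * (pZ g x z * pY z t y))%:E)); last first.
    by move=> z _; rewrite /qf mulrC.
  rewrite intZ; last 3 first.
  - by rewrite invr_ge0 ltW.
  - exact: mZY2.
  - by move=> z; rewrite mulr_ge0 // ltW.
  by rewrite -/CZ CE -EFinM mulVf // gt_eqF.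
have Iqg : \int[muZ]_z (qg z)%:E = M%:E.
  rewrite (eq_integral (fun z => (Cr^-1 * (pZ g x z * pY z t y * pY' z t' y'))%:E)); last first.
    by move=> z _; rewrite /qg /qf; congr EFin; ring.
  rewrite intZ; last 3 first.
  - by rewrite invr_ge0 ltW.
  - exact: mZY3.
  - by move=> z; rewrite !mulr_ge0 // ltW.
  by rewrite -/EZ EE -EFinM /M mulrC.
have iq : muZ.-integrable setT (fun z => (qf z)%:E).
  apply/integrableP; split; first exact/measurable_EFinP.
  rewrite (eq_integral (fun z => (qf z)%:E)) ?Iq ?ltry //.
  by move=> z _; rewrite gee0_abs // lee_fin.
have iqg : muZ.-integrable setT (fun z => (qg z)%:E).
  apply/integrableP; split; first exact/measurable_EFinP.
  rewrite (eq_integral (fun z => (qg z)%:E)) ?Iqg ?ltry //.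
  by move=> z _; rewrite gee0_abs // lee_fin.
have iA := integrableZl measurableT K0 iq.
have iB := integrableZl measurableT (M^-1) iqg.
have ihf : muZ.-integrable setT (fun z => (hf z)%:E).
  apply: (eq_integrable measurableT _ _ _ (integrableD measurableT iA iB)).
  by move=> z _; rewrite /hf /= EFinD !EFinM.
have Ihf : \int[muZ]_z (hf z)%:E = (K0 + 1)%:E.
  rewrite (eq_integral (fun z => (K0%:E * (qf z)%:E) + (M^-1%:E * (qg z)%:E))); last first.
    by move=> z _; rewrite /hf EFinD !EFinM.
  have E2 := integralD measurableT iA iB.
  cbv beta in E2; rewrite E2.
  have E3 := integralZl measurableT iq K0.
  have E4 := integralZl measurableT iqg (M^-1).
  cbv beta in E3, E4; rewrite E3 E4 Iq Iqg -!EFinM -EFinD.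
  by rewrite mulr1 mulVf // gt_eqF.
have eq1 : expect muZ
      (fun z => p_Z_given_YGXT muZ muT muY pX pG pT pT' pZ pY pY' z y g x t)
      (fun z => ln (p_Y_given_ZT muG muX muT muY pX pG pT pT' pZ pY pY' y z t))
    = \int[muZ]_z (f1 z)%:E.
  by rewrite /expect; apply: eq_integral => z _; rewrite qE P1E.
have eq2 : KL muZ
      (fun z => p_Z_given_YGXT muZ muT muY pX pG pT pT' pZ pY pY' z y g x t)
      (fun z => p_Z_given_YpGXTp muZ muT muY pX pG pT pT' pZ pY pY' z y' g x t')
    = \int[muZ]_z (f2 z)%:E.
  by rewrite /KL; apply: eq_integral => z _; rewrite qE q'E.
have i1 : muZ.-integrable setT (EFin \o f1).
  apply: (eq_integrable measurableT _ _ _ intE).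
  by move=> z _; rewrite /= qE P1E.
have i2 : muZ.-integrable setT (EFin \o f2).
  apply: (eq_integrable measurableT _ _ _ intKL).
  by move=> z _; rewrite /= qE q'E.
have Hpt z : (f1 z - f2 z <= hf z)%R.
  have Z0 := pZ_pos g x z.
  have P0 := pY_pos z t y.
  have Q0 := pY'_pos z t' y'.
  have ratio : (qf z / (pZ g x z * pY' z t' y' / Dr) =
      (pY z t y * Dr) / (Cr * pY' z t' y'))%R.
    by rewrite /qf; field; rewrite !lt0r_neq0.
  have lnr : ln ((pY z t y * Dr) / (Cr * pY' z t' y')) =
      (ln (pY z t y) + ln Dr - (ln Cr + ln (pY' z t' y')))%R.
    rewrite ln_div ?posrE ?mulr_gt0 // lnM ?posrE // lnM ?posrE //.
  have lnQ : (ln (pY' z t' y') <= ln M - 1 + M^-1 * pY' z t' y')%R.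
    have u0 : (0 < M^-1 * pY' z t' y')%R by rewrite mulr_gt0 // invr_gt0.
    have H := @le_ln1Dx R (M^-1 * pY' z t' y' - 1)%R ltac:(lra).
    move: H; rewrite addrC subrK lnM ?posrE ?invr_gt0 // lnV ?posrE //.
    lra.
  rewrite /f1 /f2 ratio lnr /hf /qg.
  have -> : (qf z * ln (pY z t y) - qf z * (ln (pY z t y) + ln Dr - (ln Cr + ln (pY' z t' y')))
      = qf z * (ln Cr - ln Dr + ln (pY' z t' y')))%R by ring.
  have -> : (K0 * qf z + M^-1 * (qf z * pY' z t' y') =
      qf z * (K0 + M^-1 * pY' z t' y'))%R by ring.
  apply: ler_wpM2l => //; rewrite /K0; lra.
have Hle : \int[muZ]_z ((f1 z)%:E - (f2 z)%:E) <= \int[muZ]_z (hf z)%:E.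
  apply: le_integral => //.
  - exact: (integrableB measurableT i1 i2).
  - by move=> z _; rewrite -EFinB lee_fin.
rewrite eq1 eq2 /Jobj pYY pYG pYpG.
rewrite addeAC -(integralB_EFin measurableT i1 i2).
apply: le_trans (leeD Hle (lexx _)) _.
rewrite Ihf -EFinD lee_fin /K0 -/M; lra.
Qed.
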